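(* Let $S_j$ be local potentials satisfying (A)–(E), and let $(p_1,q_1),\dots,(p_d,q_d)\in\mathbb{Z}^d\times\mathbb{Z}$ with $p_1,\dots,p_d$ linearly independent. If $x\in\mathbb{X}_{p,q}$ is a global minimizer, then $x$ minimizes $W_{p,q}$ on $\mathbb{X}_{p,q}$.
   Context: Notation: $\|i\|=\sum_{k=1}^d|i_k|$, $B_j^r=\{k:\|k-j\|\le r\}$, $(\tau_{k,l}x)_i=x_{i+k}+l$. Local potentials $S_j:\mathbb{R}^{\mathbb{Z}^d}\to\mathbb{R}$, $j\in\mathbb{Z}^d$, satisfy: (A) there is $r\in(0,\infty)$ and $C^2$ functions $s_j:\mathbb{R}^{B_j^r}\to\mathbb{R}$ with $S_j(x)=s_j(x|_{B_j^r})$; (B) $S_j(\tau_{k,l}x)=S_{j+k}(x)$; (C) each $S_j$ is bounded below and $S_j(x)\to\infty$ as $|x_k-x_j|\to\infty$ whenever $\|k-j\|=1$; (D) $\partial_{i,k}S_j\le0$ for $i\ne k$, and $\partial_{i,k}S_i<0$ when $\|i-k\|=1$; (E) $|\partial_{i,k}S_j|\le C$ uniformly. With $p$ the matrix with columns $p_j$: $B_p=p([0,1)^d)\cap\mathbb{Z}^d$, $\mathbb{X}_{p,q}=\{x:\tau_{p_j,q_j}x=x\ \forall j\}$, $W_{p,q}(x)=\sum_{j\in B_p}S_j(x)$. For finite $B\subset\mathbb{Z}^d$: $W_B(x)=\sum_{j\in B}S_j(x)$ and $\mathring{B}^{(r)}=\{i\in B:B_i^r\subset B\}$. A configuration $x$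 is a global minimizer if $W_B(x+y)\ge W_B(x)$ for every finite $B$ and every $y$ with support in $\mathring{B}^{(r)}$. *)

(* Defs.v *)
From Stdlib Require Vectors.Fin.
From Stdlib Require Import Reals ZArith List ClassicalEpsilon.
Open Scope R_scope.

Definition Vec (d : nat) := Fin.t d -> Z.
Definition Config (d : nat) := Vec d -> R.

Fixpoint sumFinR (n : nat) : (Fin.t n -> R) -> R :=
  match n with
  | O => fun _ => 0
  | S m => fun f => f Fin.F1 + sumFinR m (fun i => f (Fin.FS i))
  end.

Fixpoint sumFinZ (n : nat) : (Fin.t n -> Z) -> Z :=
  match n with
  | O => fun _ => 0%Z
  | S m => fun f => (f Fin.F1 + sumFinZ m (fun i => f (Fin.FS i)))%Z
  end.

Definition vadd {d} (i k : Vec d) : Vec d := fun m => (i m + k m)%Z.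
Definition vsub {d} (i k : Vec d) : Vec d := fun m => (i m - k m)%Z.

Definition norm1 {d} (i : Vec d) : Z := sumFinZ d (fun m => Z.abs (i m)).

Definition ball {d} (j : Vec d) (r : R) (k : Vec d) : Prop :=
  IZR (norm1 (vsub k j)) <= r.

Definition tau {d} (k : Vec d) (l : Z) (x : Config d) : Config d :=
  fun i => x (vadd i k) + IZR l.

Definition upd {d} (x : Config d) (i : Vec d) (t : R) : Config d :=
  fun k => if excluded_middle_informative (k = i) then t else x k.

Definition has_partial {d} (f : Config d -> R) (i : Vec d) (x : Config d) (l : R)
  : Prop := derivable_pt_lim (fun t => f (upd x i t)) (x i) l.

Definition cont_wrt {d} (B : Vec d -> Prop) (g : Config d -> R) : Prop :=
  forall x eps, 0 < eps -> exists delta, 0 < delta /\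
    forall y, (forall k, B k -> Rabs (y k - x k) < delta) -> Rabs (g y - g x) < eps.

(* f (which depends only on the coordinates in B) is C^2 as a function of
   the finitely many variables (x_k)_{k in B}: all partial derivatives of
   order <= 2 exist and are continuous. *)
Definition C2_wrt {d} (B : Vec d -> Prop) (f : Config d -> R) : Prop :=
  exists (D1 : Vec d -> Config d -> R) (D2 : Vec d -> Vec d -> Config d -> R),
    (forall k x, has_partial f k x (D1 k x)) /\
    (forall i k x, has_partial (D1 k) i x (D2 i k x)) /\
    cont_wrt B f /\
    (forall k, cont_wrt B (D1 k)) /\
    (forall i k, cont_wrt B (D2 i k)).

(* d_{i,k} f (x) = l : second partial derivative, first in x_k then in x_i *)
Definition partial2 {d} (f : Config d -> R) (i k : Vec d) (x : Config d) (l : R)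
  : Prop :=
  exists D1 : Config d -> R,
    (forall y, has_partial f k y (D1 y)) /\ has_partial D1 i x l.

Definition condA {d} (r : R) (S : Vec d -> Config d -> R) : Prop :=
  0 < r /\
  forall j, (forall x y, (forall k, ball j r k -> x k = y k) -> S j x = S j y)
            /\ C2_wrt (ball j r) (S j).

Definition condB {d} (S : Vec d -> Config d -> R) : Prop :=
  forall j k l x, S j (tau k l x) = S (vadd j k) x.

Definition condC {d} (S : Vec d -> Config d -> R) : Prop :=
  forall j, (exists m, forall x, m <= S j x) /\
    forall k, norm1 (vsub k j) = 1%Z ->
      forall M, exists R0, forall x, R0 < Rabs (x k - x j) -> M < S j x.

Definition condD {d} (S : Vec d -> Config d -> R) : Prop :=
  (forall j i k x l, i <> k -> partial2 (S j) i k x l -> l <= 0) /\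
  (forall i k x l, norm1 (vsub i k) = 1%Z -> partial2 (S i) i k x l -> l < 0).

Definition condE {d} (S : Vec d -> Config d -> R) : Prop :=
  exists C, forall j i k x l, partial2 (S j) i k x l -> Rabs l <= C.

Definition sum_list (l : list R) : R := fold_right Rplus 0 l.

(* W_B(x) = sum_{j in B} S_j(x), for a finite B given as a duplicate-free list *)
Definition W_B {d} (S : Vec d -> Config d -> R) (B : list (Vec d)) (x : Config d)
  : R := sum_list (map (fun j => S j x) B).

(* sum over a finite set P of lattice points (via a chosen duplicate-free
   enumeration of P; independent of the choice when P is finite) *)
Definition finsum {d} (P : Vec d -> Prop) (f : Vec d -> R) : R :=
  sum_list (map f (epsilon (inhabits (@nil (Vec d)))
                     (fun l => NoDup l /\ forall j, In j l <-> P j))).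

Definition interior {d} (r : R) (B : list (Vec d)) (i : Vec d) : Prop :=
  In i B /\ forall k, ball i r k -> In k B.

Definition cfg_add {d} (x y : Config d) : Config d := fun i => x i + y i.

Definition global_minimizer {d} (r : R) (S : Vec d -> Config d -> R)
  (x : Config d) : Prop :=
  forall (B : list (Vec d)) (y : Config d), NoDup B ->
    (forall i, y i <> 0 -> interior r B i) ->
    W_B S B x <= W_B S B (cfg_add x y).

(* p j is the j-th column p_j of the matrix p *)
Definition lin_indep {d} (p : Fin.t d -> Vec d) : Prop :=
  forall c : Fin.t d -> R,
    (forall m, sumFinR d (fun j => c j * IZR (p j m)) = 0) -> forall j, c j = 0.

Definition Bp {d} (p : Fin.t d -> Vec d) (k : Vec d) : Prop :=
  exists t : Fin.t d -> R, (forall j, 0 <= t j < 1) /\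
    forall m, IZR (k m) = sumFinR d (fun j => t j * IZR (p j m)).

Definition Xpq {d} (p : Fin.t d -> Vec d) (q : Fin.t d -> Z) (x : Config d) : Prop :=
  forall j, tau (p j) (q j) x = x.

Definition Wpq {d} (S : Vec d -> Config d -> R) (p : Fin.t d -> Vec d)
  (x : Config d) : R := finsum (Bp p) (fun j => S j x).

(* Main.v *)
Require Import Defs.
From Stdlib Require Vectors.Fin.
From Stdlib Require Import Reals ZArith List Lia Lra.
Open Scope R_scope.
From mathcomp Require ssreflect ssrbool ssrfun eqtype ssrnat seq fintype bigop ssralg matrix mxalgebra Rstruct.
Module MC.
Import ssreflect ssrbool ssrfun eqtype ssrnat seq fintype bigop ssralg matrix mxalgebra Rstruct.
Import GRing.Theory.
Local Open Scope ring_scope.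

Definition ofOrd {d} (i : 'I_d) : Fin.t d := Fin.of_nat_lt (elimT ltP (ltn_ord i)).
Definition toOrd {d} (j : Fin.t d) : 'I_d := Ordinal (introT ltP (proj2_sig (Fin.to_nat j))).

Lemma ofOrdK {d} (j : Fin.t d) : ofOrd (toOrd j) = j.
Proof.
  rewrite /ofOrd /toOrd /=. rewrite -[RHS]Fin.of_nat_to_nat_inv. apply Fin.of_nat_ext.
Qed.

Lemma toOrdK {d} (i : 'I_d) : toOrd (ofOrd i) = i.
Proof.
  apply: val_inj. rewrite /ofOrd /toOrd /=. by rewrite Fin.to_nat_of_nat.
Qed.

Lemma ofOrd0 d : ofOrd (@ord0 d) = Fin.F1.
Proof. reflexivity. Qed.

Lemma ofOrd_lift d (i : 'I_d) : ofOrd (lift ord0 i) = Fin.FS (ofOrd i).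
Proof.
  rewrite /ofOrd. move: (elimT ltP (ltn_ord (lift ord0 i))) => h.
  have e : (lift ord0 i : nat) = S i by [].
  move: h. rewrite e => h. simpl. f_equal. apply Fin.of_nat_ext.
Qed.

Lemma sumFinR_big d (f : Fin.t d -> R) : sumFinR d f = \sum_(i < d) f (ofOrd i).
Proof.
  elim: d f => [|d IH] f. by rewrite big_ord0.
  rewrite big_ord_recl /=. rewrite IH. apply (f_equal2 Rplus); first by []. apply: eq_bigr => i _.
  by rewrite ofOrd_lift.
Qed.
Lemma right_inv d (p : Fin.t d -> Vec d) : lin_indep p ->
  exists A : Fin.t d -> Fin.t d -> R, forall m m',
    sumFinR d (fun j => Rmult (IZR (p j m)) (A j m')) =
      (if Fin.eq_dec m m' then R1 else R0).
Proof.
  move=> Hli.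
  pose Pm : 'M[R]_d := \matrix_(j, m) IZR (p (ofOrd j) (ofOrd m)).
  have Hdet : \det Pm != 0.
  { apply/negP => /det0P [v vn0 hv]. move/negP: vn0; apply; apply/eqP.
    pose c := fun j : Fin.t d => v ord0 (toOrd j).
    have hc : forall j, c j = 0.
    { apply Hli => m. rewrite sumFinR_big.
      have := congr1 (fun M : 'rV_d => M ord0 (toOrd m)) hv.
      rewrite !mxE /= => H0. rewrite -[RHS]H0. apply: eq_bigr => i _. rewrite mxE /c toOrdK ofOrdK //. }
    apply/matrixP => i j. rewrite mxE. rewrite (ord1 i).
    have := hc (ofOrd j). by rewrite /c toOrdK. }
  have Hu : Pm \in unitmx by rewrite unitmxE unitfE.
  pose Inv := invmx Pm.
  exists (fun j m' => Inv (toOrd m') (toOrd j)) => m m'.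
  rewrite sumFinR_big.
  have := congr1 (fun M : 'M_d => M (toOrd m') (toOrd m)) (mulVmx Hu).
  rewrite !mxE => H.
  transitivity (\sum_j Inv (toOrd m') j * Pm j (toOrd m)).
  { apply: eq_bigr => i _. rewrite mxE toOrdK ofOrdK mulrC //. }
  rewrite H. destruct (Fin.eq_dec m m') as [e|ne]. { subst m'. by rewrite eqxx. }
  case: eqP => // e. exfalso; apply ne. by rewrite -(ofOrdK m) -(ofOrdK m') e.
Qed.
End MC.

From Stdlib Require Import FunctionalExtensionality Permutation ClassicalEpsilon.

Lemma sum_list_app (l1 l2 : list R) : sum_list (l1 ++ l2) = sum_list l1 + sum_list l2.
Proof. induction l1; simpl. ring. rewrite IHl1. ring. Qed.

Lemma sum_map_plus {A} (f g : A -> R) l :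
  sum_list (map (fun a => f a + g a) l) = sum_list (map f l) + sum_list (map g l).
Proof. induction l; simpl. ring. rewrite IHl. ring. Qed.

Lemma sum_map_scal {A} (c : R) (f : A -> R) l :
  sum_list (map (fun a => c * f a) l) = c * sum_list (map f l).
Proof. induction l; simpl. ring. rewrite IHl. ring. Qed.

Lemma sum_map_ext {A} (f g : A -> R) l :
  (forall a, In a l -> f a = g a) -> sum_list (map f l) = sum_list (map g l).
Proof. induction l; simpl; intros H. reflexivity. rewrite H, IHl; auto. Qed.

Lemma sum_map_le {A} (f g : A -> R) l :
  (forall a, In a l -> f a <= g a) -> sum_list (map f l) <= sum_list (map g l).
Proof. induction l; simpl; intros H. lra. assert (f a <= g a) by auto.
  assert (sum_list (map f l) <= sum_list (map g l)) by auto. lra. Qed.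

Lemma sum_map_const {A} (c : R) (l : list A) :
  sum_list (map (fun _ => c) l) = INR (length l) * c.
Proof. induction l. simpl. ring.
  simpl map; simpl length. rewrite S_INR. simpl sum_list. rewrite IHl. ring. Qed.

Lemma sum_map_swap {A B} (f : A -> B -> R) la lb :
  sum_list (map (fun a => sum_list (map (fun b => f a b) lb)) la) =
  sum_list (map (fun b => sum_list (map (fun a => f a b) la)) lb).
Proof.
  induction la; simpl.
  - induction lb; simpl; auto. rewrite <- IHlb. ring.
  - rewrite IHla. rewrite <- sum_map_plus. reflexivity.
Qed.

Lemma sum_map_nonneg_le {A} (f : A -> R) l a :
  (forall b, In b l -> 0 <= f b) -> In a l -> f a <= sum_list (map f l).
Proof.
  induction l; simpl; intros H Hin. contradiction.
  assert (0 <= sum_list (map f l)).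
  { clear IHl Hin. induction l; simpl. lra.
    assert (0 <= f a1) by (apply H; simpl; auto).
    assert (0 <= sum_list (map f l)). { apply IHl. intros; apply H. simpl in *. tauto. }
    lra. }
  destruct Hin as [->|Hin]. lra.
  assert (f a <= sum_list (map f l)) by auto. assert (0 <= f a0) by auto. lra.
Qed.

Lemma sum_flat_map {A B} (f : A -> list B) (g : B -> R) l :
  sum_list (map g (flat_map f l)) = sum_list (map (fun a => sum_list (map g (f a))) l).
Proof. induction l; simpl. reflexivity. rewrite map_app, sum_list_app, IHl. reflexivity. Qed.

Lemma sum_split_bound {A} (g : A -> R) (P : A -> bool) (a c : R) l :
  (forall n, In n l -> if P n then g n = a else g n <= c) ->
  sum_list (map g l) <= a * INR (length (filter P l)) + c * (INR (length l) - INR (length (filter P l))).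
Proof.
  induction l as [|x l IH]; intros H. simpl. lra. simpl map; simpl filter; simpl sum_list.
  assert (IH' := IH (fun n h => H n (or_intror h))).
  specialize (H x (or_introl eq_refl)).
  destruct (P x); simpl length; rewrite !S_INR; lra.
Qed.

Lemma NoDup_map_inj {A B} (f : A -> B) l :
  (forall a b, In a l -> In b l -> f a = f b -> a = b) -> NoDup l -> NoDup (map f l).
Proof.
  induction l as [|x l IH]; simpl; intros Hi Hn. constructor.
  inversion Hn; subst. constructor.
  - intros Hin. apply in_map_iff in Hin as [y [e Hy]].
    assert (y = x) by (apply Hi; auto). subst; contradiction.
  - apply IH; auto.
Qed.

Lemma NoDup_flat_map {A B} (f : A -> list B) l :
  NoDup l -> (forall a, In a l -> NoDup (f a)) ->
  (forall a a' b, In a l -> In a' l -> In b (f a) -> In b (f a') -> a = a') ->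
  NoDup (flat_map f l).
Proof.
  induction l as [|x l IH]; simpl; intros Hn Hf Hd. constructor.
  inversion Hn; subst. apply NoDup_app.
  { apply Hf; auto. }
  { apply IH; auto. intros a a' b Ha Ha'. apply Hd; auto. }
  intros b Hb Hb'. apply in_flat_map in Hb' as [a' [Ha' Hb']].
  assert (x = a') by (apply (Hd x a' b); auto). subst; contradiction.
Qed.

Fixpoint enumFin (d : nat) : list (Fin.t d) :=
  match d with O => nil | S n => Fin.F1 :: map Fin.FS (enumFin n) end.

Lemma enumFin_all d (i : Fin.t d) : In i (enumFin d).
Proof.
  induction i; simpl. auto. right. apply in_map. auto.
Qed.

Lemma enumFin_NoDup d : NoDup (enumFin d).
Proof.
  induction d; simpl; constructor.
  - intro H. apply in_map_iff in H as [y [e _]]. discriminate.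
  - apply NoDup_map_inj; auto. intros a b _ _ e. apply Fin.FS_inj; auto.
Qed.

Lemma sumFinR_list d f : sumFinR d f = sum_list (map f (enumFin d)).
Proof.
  induction d; simpl. reflexivity. rewrite IHd, map_map. reflexivity.
Qed.

Definition sumZ (l : list Z) : Z := fold_right Z.add 0%Z l.

Lemma sumFinZ_list d f : sumFinZ d f = sumZ (map f (enumFin d)).
Proof.
  induction d; simpl. reflexivity. rewrite IHd, map_map. reflexivity.
Qed.

Lemma IZR_sumZ {A} (f : A -> Z) l : IZR (sumZ (map f l)) = sum_list (map (fun a => IZR (f a)) l).
Proof. induction l; simpl. reflexivity. rewrite plus_IZR, IHl. reflexivity. Qed.

Lemma sumZ_nonneg_le {A} (f : A -> Z) l a :
  (forall b, In b l -> (0 <= f b)%Z) -> In a l -> (f a <= sumZ (map f l))%Z.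
Proof.
  intros H Hin. apply le_IZR. rewrite IZR_sumZ.
  apply (sum_map_nonneg_le (fun b => IZR (f b))); auto.
  intros. apply IZR_le. auto.
Qed.

Lemma sum_delta {A} (eqd : forall a b : A, {a = b} + {a <> b}) (g : A -> R) l m :
  NoDup l -> In m l ->
  sum_list (map (fun m' => g m' * (if eqd m m' then 1 else 0)) l) = g m.
Proof.
  induction l as [|x l IH]; simpl; intros Hn Hin. contradiction.
  inversion Hn; subst.
  destruct (eqd m x) as [e|ne].
  - subst. rewrite (sum_map_ext _ (fun _ => 0)). rewrite sum_map_const. ring.
    intros a Ha. destruct (eqd x a). subst; contradiction. ring.
  - destruct Hin as [e|Hin]. subst; contradiction. rewrite IH; auto. ring.
Qed.

Definition vcons {d} (h : Z) (v : Fin.t d -> Z) : Fin.t (S d) -> Z :=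
  fun i => Fin.caseS' i (fun _ => Z) h v.

Lemma vcons_eta {d} (v : Fin.t (S d) -> Z) : v = vcons (v Fin.F1) (fun i => v (Fin.FS i)).
Proof. apply functional_extensionality. intro i. pattern i. apply Fin.caseS'; reflexivity. Qed.

Lemma vcons_inj {d} h h' (v v' : Fin.t d -> Z) : vcons h v = vcons h' v' -> h = h' /\ v = v'.
Proof.
  intro e. split. exact (f_equal (fun f => f Fin.F1) e).
  apply functional_extensionality; intro i. exact (f_equal (fun f => f (Fin.FS i)) e).
Qed.

Definition zrange (a b : Z) : list Z :=
  map (fun k => (a + Z.of_nat k)%Z) (seq 0 (Z.to_nat (b - a))).

Lemma zrange_In a b z : In z (zrange a b) <-> (a <= z < b)%Z.
Proof.
  unfold zrange. rewrite in_map_iff. split.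
  - intros [k [e Hk]]. apply in_seq in Hk. lia.
  - intros H. exists (Z.to_nat (z - a)). split. lia. apply in_seq. lia.
Qed.

Lemma zrange_NoDup a b : NoDup (zrange a b).
Proof. unfold zrange. apply NoDup_map_inj. intros; lia. apply seq_NoDup. Qed.

Lemma zrange_length a b : length (zrange a b) = Z.to_nat (b - a).
Proof. unfold zrange. rewrite length_map, length_seq. reflexivity. Qed.

Fixpoint boxlist (a b : Z) (d : nat) : list (Fin.t d -> Z) :=
  match d with
  | O => (fun _ => 0%Z) :: nil
  | S n => flat_map (fun h => map (vcons h) (boxlist a b n)) (zrange a b)
  end.

Lemma boxlist_In a b d (v : Fin.t d -> Z) :
  In v (boxlist a b d) <-> (forall j, (a <= v j < b)%Z).
Proof.
  induction d; simpl.
  - split; intros. apply Fin.case0; auto. left. apply functional_extensionality.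
    intro j; apply Fin.case0; auto.
  - rewrite in_flat_map. split.
    + intros [h [Hh Hv]]. apply in_map_iff in Hv as [w [e Hw]]. subst v.
      intro j. pattern j. apply Fin.caseS'.
      * simpl. apply zrange_In; auto.
      * intro i. simpl. apply IHd. auto.
    + intros H. exists (v Fin.F1). split. apply zrange_In; auto.
      apply in_map_iff. exists (fun i => v (Fin.FS i)). split.
      symmetry; apply vcons_eta. apply IHd. auto.
Qed.

Lemma boxlist_NoDup a b d : NoDup (boxlist a b d).
Proof.
  induction d; simpl.
  - constructor. simpl; auto. constructor.
  - apply NoDup_flat_map. apply zrange_NoDup.
    + intros h _. apply NoDup_map_inj; auto. intros v w _ _ e. apply vcons_inj in e. tauto.
    + intros h h' v _ _ H1 H2. apply in_map_iff in H1 as [w [e1 _]].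
      apply in_map_iff in H2 as [w' [e2 _]]. subst. apply vcons_inj in e2. destruct e2; auto.
Qed.

Lemma length_flat_map_const {A B} (f : A -> list B) l k :
  (forall a, In a l -> length (f a) = k) -> length (flat_map f l) = (length l * k)%nat.
Proof.
  induction l; simpl; intros H. reflexivity. rewrite length_app, H, IHl; auto.
Qed.

Lemma boxlist_length a b d : length (boxlist a b d) = (Z.to_nat (b - a) ^ d)%nat.
Proof.
  induction d; simpl. reflexivity.
  rewrite (length_flat_map_const _ _ (length (boxlist a b d))).
  rewrite zrange_length, IHd. reflexivity.
  intros; rewrite length_map; reflexivity.
Qed.

Lemma same_elems_length {A} (l l' : list A) :
  NoDup l -> NoDup l' -> (forall x, In x l <-> In x l') -> length l = length l'.
Proof. intros. apply Permutation_length. apply NoDup_Permutation; auto. Qed.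

Fixpoint power {A} (l : list A) : list (list A) :=
  match l with
  | nil => nil :: nil
  | a :: l => power l ++ map (cons a) (power l)
  end.

Lemma filter_in_power {A} (f : A -> bool) l : In (filter f l) (power l).
Proof.
  induction l; simpl. auto. destruct (f a); apply in_or_app; [right; apply in_map|left]; auto.
Qed.

Fixpoint maxlist (l : list R) : R :=
  match l with nil => 0 | a :: l => Rmax a (maxlist l) end.

Lemma maxlist_ge l a : In a l -> a <= maxlist l.
Proof.
  induction l; simpl; intros H. contradiction.
  destruct H as [->|H]. apply Rmax_l. eapply Rle_trans. apply IHl; auto. apply Rmax_r.
Qed.

Lemma maxlist_nonneg l : 0 <= maxlist l.
Proof. induction l; simpl. lra. eapply Rle_trans. apply IHl. apply Rmax_r. Qed.


Definition lv {d} (p : Fin.t d -> Vec d) (n : Fin.t d -> Z) : Vec d :=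
  fun m => sumFinZ d (fun j => (n j * p j m)%Z).
Definition lq {d} (q : Fin.t d -> Z) (n : Fin.t d -> Z) : Z :=
  sumFinZ d (fun j => (n j * q j)%Z).

Definition shiftper {d} (x : Config d) (k : Vec d) (c : R) : Prop :=
  forall i, x (vadd i k) = x i - c.

Lemma vadd_assoc {d} (i a b : Vec d) : vadd (vadd i a) b = vadd i (fun m => (a m + b m)%Z).
Proof. apply functional_extensionality; intro m; unfold vadd; lia. Qed.

Lemma vadd_0 {d} (i : Vec d) : vadd i (fun _ => 0%Z) = i.
Proof. apply functional_extensionality; intro m; unfold vadd; lia. Qed.

Lemma shiftper_add {d} (x : Config d) a b ca cb :
  shiftper x a ca -> shiftper x b cb -> shiftper x (fun m => (a m + b m)%Z) (ca + cb).
Proof. intros Ha Hb i. rewrite <- vadd_assoc, Hb, Ha. ring. Qed.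

Lemma shiftper_0 {d} (x : Config d) : shiftper x (fun _ => 0%Z) 0.
Proof. intro i. rewrite vadd_0. ring. Qed.

Lemma shiftper_neg {d} (x : Config d) a c :
  shiftper x a c -> shiftper x (fun m => (- a m)%Z) (- c).
Proof.
  intros H i. set (i' := vadd i (fun m => (- a m)%Z)).
  assert (e : vadd i' a = i). { apply functional_extensionality; intro m; unfold i', vadd; lia. }
  specialize (H i'). rewrite e in H. lra.
Qed.

Lemma shiftper_ext {d} (x : Config d) a b c c' :
  shiftper x a c -> (forall m, a m = b m) -> c = c' -> shiftper x b c'.
Proof. intros H e ->. replace b with a; auto. apply functional_extensionality; auto. Qed.

Lemma shiftper_mult {d} (x : Config d) a c (z : Z) :
  shiftper x a c -> shiftper x (fun m => (z * a m)%Z) (IZR z * c).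
Proof.
  intros H.
  assert (Hn : forall k : nat, shiftper x (fun m => (Z.of_nat k * a m)%Z) (INR k * c)).
  { induction k.
    - eapply shiftper_ext. apply shiftper_0. intro; simpl; lia. simpl; ring.
    - eapply shiftper_ext. apply (shiftper_add _ _ _ _ _ IHk H).
      intro m; rewrite Nat2Z.inj_succ; lia. rewrite S_INR; ring. }
  destruct (Z_le_gt_dec 0 z).
  - eapply shiftper_ext. apply (Hn (Z.to_nat z)). intro; rewrite Z2Nat.id; auto.
    rewrite INR_IZR_INZ, Z2Nat.id; auto.
  - eapply shiftper_ext. apply shiftper_neg, (Hn (Z.to_nat (- z))).
    intro; rewrite Z2Nat.id; lia. rewrite INR_IZR_INZ, Z2Nat.id by lia. rewrite opp_IZR. ring.
Qed.

Lemma shiftper_list {d} (x : Config d) (p : Fin.t d -> Vec d) (c : Fin.t d -> R) (n : Fin.t d -> Z) l :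
  (forall j, shiftper x (p j) (c j)) ->
  shiftper x (fun m => sumZ (map (fun j => (n j * p j m)%Z) l))
             (sum_list (map (fun j => IZR (n j) * c j) l)).
Proof.
  intros H. induction l; simpl.
  - apply shiftper_0.
  - apply shiftper_add; auto. apply shiftper_mult; auto.
Qed.

Lemma Xpq_shiftper {d} p q (x : Config d) j : Xpq p q x -> shiftper x (p j) (IZR (q j)).
Proof.
  intros H i. pose proof (f_equal (fun f => f i) (H j)) as e. unfold tau in e. simpl in e. lra.
Qed.

Lemma Xpq_lv {d} p q (x : Config d) n : Xpq p q x ->
  forall i, x (vadd i (lv p n)) = x i - IZR (lq q n).
Proof.
  intros H i.
  pose proof (shiftper_list x p (fun j => IZR (q j)) n (enumFin d) (fun j => Xpq_shiftper p q x j H) i) as e.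
  unfold lv, lq. rewrite sumFinZ_list.
  replace (fun m => sumFinZ d (fun j => (n j * p j m)%Z)) with
    (fun m => sumZ (map (fun j => (n j * p j m)%Z) (enumFin d))).
  rewrite e, IZR_sumZ. rewrite (sum_map_ext _ (fun j => IZR (n j * q j))).
  reflexivity. intros; rewrite mult_IZR; ring.
  apply functional_extensionality; intro; rewrite sumFinZ_list; reflexivity.
Qed.

Lemma tau_lv_fix {d} p q (x : Config d) n : Xpq p q x -> tau (lv p n) (lq q n) x = x.
Proof.
  intro H. apply functional_extensionality; intro i. unfold tau. rewrite Xpq_lv with (q := q); auto.
  ring.
Qed.

Lemma S_per {d} (S : Vec d -> Config d -> R) p q (x : Config d) n j :
  condB S -> Xpq p q x -> S (vadd j (lv p n)) x = S j x.
Proof.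
  intros HB Hx. rewrite <- (HB j (lv p n) (lq q n) x). rewrite tau_lv_fix with (q := q); auto.
Qed.


Definition isRinv {d} (p : Fin.t d -> Vec d) (A : Fin.t d -> Fin.t d -> R) : Prop :=
  forall m m', sumFinR d (fun j => Rmult (IZR (p j m)) (A j m')) =
      (if Fin.eq_dec m m' then R1 else R0).

Definition tco {d} (A : Fin.t d -> Fin.t d -> R) (k : Vec d) (j : Fin.t d) : R :=
  sumFinR d (fun m' => A j m' * IZR (k m')).

Lemma sum_map_scal_r {X} (c : R) (f : X -> R) l :
  sum_list (map (fun a => f a * c) l) = sum_list (map f l) * c.
Proof. induction l; simpl. ring. rewrite IHl. ring. Qed.

Lemma tco_spec {d} p A (k : Vec d) m : isRinv p A ->
  sumFinR d (fun j => tco A k j * IZR (p j m)) = IZR (k m).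
Proof.
  intros HA0. assert (HA : forall m m', sumFinR d (fun j => Rmult (IZR (p j m)) (A j m')) =
      (if Fin.eq_dec m m' then 1 else 0)).
  { intros a b. rewrite HA0. destruct (Fin.eq_dec a b); reflexivity. }
  unfold tco. rewrite sumFinR_list.
  rewrite (sum_map_ext _ (fun j => sum_list (map (fun m' => A j m' * IZR (k m') * IZR (p j m)) (enumFin d)))).
  2:{ intros j _. rewrite sumFinR_list, sum_map_scal_r. reflexivity. }
  rewrite sum_map_swap.
  rewrite (sum_map_ext _ (fun m' => IZR (k m') * (if Fin.eq_dec m m' then 1 else 0))).
  apply (sum_delta Fin.eq_dec (fun m0 => IZR (k m0))). apply enumFin_NoDup. apply enumFin_all.
  intros m' _. rewrite <- (HA m m'), sumFinR_list, <- sum_map_scal.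
  apply sum_map_ext. intros; ring.
Qed.

Lemma lin_uniq {d} (p : Fin.t d -> Vec d) (t t' : Fin.t d -> R) : lin_indep p ->
  (forall m, sumFinR d (fun j => t j * IZR (p j m)) = sumFinR d (fun j => t' j * IZR (p j m))) ->
  forall j, t j = t' j.
Proof.
  intros Hl H j. assert (Hc := Hl (fun j => t j - t' j)).
  enough (t j - t' j = 0) by lra. apply Hc. intro m. specialize (H m).
  rewrite !sumFinR_list in H. rewrite sumFinR_list. rewrite (sum_map_ext _ (fun j => t j * IZR (p j m) + (-1) * (t' j * IZR (p j m)))).
  rewrite sum_map_plus, sum_map_scal. lra. intros; ring.
Qed.

Lemma Int_part_shift (t : R) (n : Z) : 0 <= t < 1 -> Int_part (t + IZR n) = n.
Proof.
  intros H. unfold Int_part. rewrite <- (tech_up _ (n + 1)). lia.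
  rewrite plus_IZR; lra. rewrite plus_IZR; lra.
Qed.

Definition cell {d} A (k : Vec d) : Fin.t d -> Z := fun j => Int_part (tco A k j).
Definition rep {d} p A (k : Vec d) : Vec d := fun m => (k m - lv p (cell A k) m)%Z.

Lemma IZR_lv {d} p (n : Fin.t d -> Z) m :
  IZR (lv p n m) = sumFinR d (fun j => IZR (n j) * IZR (p j m)).
Proof.
  unfold lv. rewrite sumFinZ_list, IZR_sumZ, sumFinR_list. apply sum_map_ext; intros; apply mult_IZR.
Qed.

Lemma rep_Bp {d} p A (k : Vec d) : isRinv p A -> Bp p (rep p A k).
Proof.
  intros HA. exists (fun j => tco A k j - IZR (cell A k j)). split.
  - intro j. unfold cell. destruct (base_Int_part (tco A k j)). lra.
  - intro m. unfold rep. rewrite minus_IZR, IZR_lv, <- (tco_spec p A k m HA).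
    rewrite !sumFinR_list. rewrite (sum_map_ext (fun j => (tco A k j - IZR (cell A k j)) * IZR (p j m))
      (fun j => tco A k j * IZR (p j m) + (-1) * (IZR (cell A k j) * IZR (p j m)))).
    rewrite sum_map_plus, sum_map_scal. ring. intros; ring.
Qed.

Lemma decomp {d} p A (k : Vec d) : vadd (rep p A k) (lv p (cell A k)) = k.
Proof. apply functional_extensionality; intro m; unfold vadd, rep; lia. Qed.

Lemma decomp_uniq {d} p A (b : Vec d) n : isRinv p A -> lin_indep p -> Bp p b ->
  cell A (vadd b (lv p n)) = n /\ rep p A (vadd b (lv p n)) = b.
Proof.
  intros HA Hl [t [Ht Hb]].
  assert (E : forall j, tco A (vadd b (lv p n)) j = t j + IZR (n j)).
  { apply (lin_uniq p); auto. intro m. rewrite tco_spec; auto.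
    unfold vadd. rewrite plus_IZR, IZR_lv, Hb, !sumFinR_list, <- sum_map_plus.
    apply sum_map_ext; intros; ring. }
  assert (Ec : cell A (vadd b (lv p n)) = n).
  { apply functional_extensionality; intro j. unfold cell. rewrite E. apply Int_part_shift; auto. }
  split; auto. apply functional_extensionality; intro m. unfold rep. rewrite Ec. unfold vadd. lia.
Qed.

Lemma Rabs_sum_list {X} (f : X -> R) l : Rabs (sum_list (map f l)) <= sum_list (map (fun a => Rabs (f a)) l).
Proof.
  induction l; simpl. rewrite Rabs_R0; lra.
  eapply Rle_trans. apply Rabs_triang. lra.
Qed.

Definition alphaA {d} (A : Fin.t d -> Fin.t d -> R) : R :=
  sumFinR d (fun j => sumFinR d (fun m => Rabs (A j m))).

Lemma alphaA_ge {d} (A : Fin.t d -> Fin.t d -> R) j m : Rabs (A j m) <= alphaA A.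
Proof.
  unfold alphaA. rewrite sumFinR_list.
  eapply Rle_trans. 2:{ apply (sum_map_nonneg_le (fun j => sumFinR d (fun m => Rabs (A j m)))).
    - intros b _. rewrite sumFinR_list. eapply Rle_trans. 2: apply (sum_map_le (fun _ => 0)).
      rewrite sum_map_const. lra. intros; apply Rabs_pos.
    - apply enumFin_all. }
  rewrite sumFinR_list. apply (sum_map_nonneg_le (fun m => Rabs (A j m))).
  intros; apply Rabs_pos. apply enumFin_all.
Qed.

Lemma alphaA_nonneg {d} (A : Fin.t d -> Fin.t d -> R) : 0 <= alphaA A.
Proof.
  unfold alphaA. rewrite sumFinR_list. eapply Rle_trans. 2: apply (sum_map_le (fun _ => 0)).
  rewrite sum_map_const. lra. intros. rewrite sumFinR_list.
  eapply Rle_trans. 2: apply (sum_map_le (fun _ => 0)). rewrite sum_map_const. lra.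
  intros; apply Rabs_pos.
Qed.

Lemma IZR_norm1 {d} (v : Vec d) : IZR (norm1 v) = sumFinR d (fun m => Rabs (IZR (v m))).
Proof.
  unfold norm1. rewrite sumFinZ_list, IZR_sumZ, sumFinR_list. apply sum_map_ext; intros; apply abs_IZR.
Qed.

Lemma tco_bound {d} (A : Fin.t d -> Fin.t d -> R) (v : Vec d) j :
  Rabs (tco A v j) <= alphaA A * IZR (norm1 v).
Proof.
  unfold tco. rewrite IZR_norm1, !sumFinR_list. eapply Rle_trans. apply Rabs_sum_list.
  rewrite <- sum_map_scal. apply sum_map_le. intros m _. rewrite Rabs_mult.
  apply Rmult_le_compat_r. apply Rabs_pos. apply alphaA_ge.
Qed.

Lemma tco_sub {d} (A : Fin.t d -> Fin.t d -> R) (k i : Vec d) j :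
  tco A (vsub k i) j = tco A k j - tco A i j.
Proof.
  unfold tco, vsub. rewrite !sumFinR_list.
  rewrite (sum_map_ext _ (fun m => A j m * IZR (k m) + (-1) * (A j m * IZR (i m)))).
  rewrite sum_map_plus, sum_map_scal. ring. intros; rewrite minus_IZR; ring.
Qed.

Definition Kc {d} (A : Fin.t d -> Fin.t d -> R) (r : R) : Z := up (alphaA A * r + 1).

Lemma Kc_pos {d} (A : Fin.t d -> Fin.t d -> R) r : 0 <= r -> (1 <= Kc A r)%Z.
Proof.
  intros Hr. unfold Kc. destruct (archimed (alphaA A * r + 1)) as [H1 _].
  assert (0 <= alphaA A * r) by (apply Rmult_le_pos; auto; apply alphaA_nonneg).
  apply le_IZR. lra.
Qed.

Lemma near_cell {d} (A : Fin.t d -> Fin.t d -> R) r (i k : Vec d) j :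
  ball i r k -> (Z.abs (cell A k j - cell A i j) < Kc A r)%Z.
Proof.
  unfold ball. intros Hb. unfold cell, Kc.
  pose proof (tco_bound A (vsub k i) j) as Hbd. rewrite tco_sub in Hbd.
  destruct (base_Int_part (tco A k j)) as [Ha1 Ha2].
  destruct (base_Int_part (tco A i j)) as [Hb1 Hb2].
  destruct (archimed (alphaA A * r + 1)) as [Hu _].
  assert (alphaA A * IZR (norm1 (vsub k i)) <= alphaA A * r).
  { apply Rmult_le_compat_l; auto. apply alphaA_nonneg. }
  assert (Hx : Rabs (tco A k j - tco A i j) <= alphaA A * r) by lra.
  apply Z.abs_lt. split; apply lt_IZR; rewrite ?minus_IZR, ?opp_IZR;
  unfold Rabs in Hx; destruct (Rcase_abs (tco A k j - tco A i j)); lra.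
Qed.


Definition Pbound {d} (p : Fin.t d -> Vec d) : Z :=
  sumZ (map (fun m => sumZ (map (fun j => Z.abs (p j m)) (enumFin d))) (enumFin d)).

Lemma Bp_bound {d} (p : Fin.t d -> Vec d) b : Bp p b -> forall m, (Z.abs (b m) <= Pbound p)%Z.
Proof.
  intros [t [Ht Hb]] m.
  apply Z.le_trans with (sumZ (map (fun j => Z.abs (p j m)) (enumFin d))).
  - apply le_IZR. rewrite abs_IZR, Hb, IZR_sumZ, sumFinR_list.
    eapply Rle_trans. apply Rabs_sum_list. apply sum_map_le. intros j _.
    rewrite Rabs_mult, abs_IZR. specialize (Ht j). rewrite (Rabs_right (t j)) by lra.
    assert (0 <= Rabs (IZR (p j m))) by apply Rabs_pos. nra.
  - unfold Pbound. apply (sumZ_nonneg_le (fun m => sumZ (map (fun j => Z.abs (p j m)) (enumFin d)))).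
    + intros. apply le_IZR. rewrite IZR_sumZ. eapply Rle_trans. 2: apply (sum_map_le (fun _ => 0)).
      rewrite sum_map_const; lra. intros; apply IZR_le; lia.
    + apply enumFin_all.
Qed.

Definition decb (P : Prop) : bool := if excluded_middle_informative P then true else false.
Lemma decb_true (P : Prop) : decb P = true <-> P.
Proof. unfold decb. destruct (excluded_middle_informative P); split; auto; discriminate. Qed.

Lemma Bp_list_ex {d} (p : Fin.t d -> Vec d) :
  exists l, NoDup l /\ forall j, In j l <-> Bp p j.
Proof.
  exists (filter (fun k => decb (Bp p k)) (boxlist (- Pbound p) (Pbound p + 1) d)). split.
  - apply NoDup_filter, boxlist_NoDup.
  - intro j. rewrite filter_In, decb_true. split. tauto.
    intros H; split; auto. apply (proj2 (boxlist_In _ _ _ j)). intro m. pose proof (Bp_bound p j H m). lia.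
Qed.

Definition lBp {d} (p : Fin.t d -> Vec d) : list (Vec d) :=
  epsilon (inhabits (@nil (Vec d))) (fun l => NoDup l /\ forall j, In j l <-> Bp p j).

Lemma lBp_spec {d} (p : Fin.t d -> Vec d) : NoDup (lBp p) /\ forall j, In j (lBp p) <-> Bp p j.
Proof. unfold lBp. apply epsilon_spec. apply Bp_list_ex. Qed.

Lemma Wpq_lBp {d} S p (x : Config d) : Wpq S p x = sum_list (map (fun j => S j x) (lBp p)).
Proof. reflexivity. Qed.

Definition ballList {d} (b : Vec d) (r : R) : list (Vec d) :=
  map (vadd b) (boxlist (- up r) (up r + 1) d).

Lemma norm1_coord {d} (v : Vec d) m : (Z.abs (v m) <= norm1 v)%Z.
Proof.
  unfold norm1. rewrite sumFinZ_list. apply (sumZ_nonneg_le (fun m => Z.abs (v m))).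
  intros; lia. apply enumFin_all.
Qed.

Lemma ballList_In {d} (b k : Vec d) r : ball b r k -> In k (ballList b r).
Proof.
  unfold ball, ballList. intros H. apply in_map_iff. exists (vsub k b). split.
  apply functional_extensionality; intro m; unfold vadd, vsub; lia.
  apply boxlist_In. intro m. destruct (archimed r) as [Hu _].
  assert (IZR (Z.abs (vsub k b m)) < IZR (up r)).
  { eapply Rle_lt_trans. 2: exact Hu. eapply Rle_trans. 2: exact H. apply IZR_le, norm1_coord. }
  apply lt_IZR in H0. lia.
Qed.


Lemma pow_diff_le (a b : R) (e : nat) : 0 <= b <= a ->
  a ^ (S e) - b ^ (S e) <= INR (S e) * (a - b) * a ^ e.
Proof.
  intros [Hb Hab]. induction e.
  - simpl. lra.
  - assert (b ^ S e <= a ^ S e) by (apply pow_incr; lra).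
    assert (0 <= a ^ e) by (apply pow_le; lra).
    replace (a ^ S (S e) - b ^ S (S e)) with (a * (a ^ S e - b ^ S e) + (a - b) * b ^ S e)
      by (simpl; ring).
    rewrite !S_INR in *.
    assert (a * (a ^ S e - b ^ S e) <= a * ((INR e + 1) * (a - b) * a ^ e))
      by (apply Rmult_le_compat_l; lra).
    assert ((a - b) * b ^ S e <= (a - b) * a ^ S e) by (apply Rmult_le_compat_l; lra).
    cbn [pow] in *. lra.
Qed.

Lemma growth (d : nat) (c dl C : R) : 0 <= c -> 0 < dl -> 0 <= C ->
  exists M : nat, C * ((INR M + c) ^ d - INR M ^ d) < dl * INR M ^ d.
Proof.
  intros Hc Hd HC. destruct d as [|e].
  - exists 1%nat. simpl. lra.
  - set (T := INR (S e) * c * 2 ^ e * C / dl).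
    assert (HT : 0 <= T).
    { unfold T. apply Rmult_le_pos. 2: left; apply Rinv_0_lt_compat; auto.
      apply Rmult_le_pos; auto. apply Rmult_le_pos. apply Rmult_le_pos; auto. apply pos_INR.
      apply pow_le; lra. }
    destruct (archimed (T + c + 1)) as [Hu _].
    assert (Hup : (0 <= up (T + c + 1))%Z) by (apply le_IZR; lra).
    exists (Z.to_nat (up (T + c + 1))).
    rewrite INR_IZR_INZ, Z2Nat.id by auto.
    set (m := IZR (up (T + c + 1))) in *.
    assert (Hm1 : 1 <= m) by lra.
    assert (Hme : 0 < m ^ e) by (apply pow_lt; lra).
    pose proof (pow_diff_le (m + c) m e ltac:(lra)) as H1.
    assert (H2 : (m + c) ^ e <= (2 * m) ^ e) by (apply pow_incr; lra).
    rewrite Rpow_mult_distr in H2.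
    assert (H3 : C * ((m + c) ^ S e - m ^ S e) <= C * (INR (S e) * c * (2 ^ e * m ^ e))).
    { apply Rmult_le_compat_l; auto. eapply Rle_trans. apply H1.
      replace (m + c - m) with c by ring.
      assert (0 <= INR (S e) * c) by (apply Rmult_le_pos; auto; apply pos_INR).
      apply Rmult_le_compat_l; auto. }
    assert (H4 : C * (INR (S e) * c * (2 ^ e * m ^ e)) = T * dl * m ^ e).
    { unfold T. field. lra. }
    assert (H5 : T * dl * m ^ e < dl * m ^ S e).
    { simpl. assert (T < m) by lra. 
      assert (0 < dl * m ^ e) by (apply Rmult_lt_0_compat; auto). nra. }
    lra.
Qed.


Definition chi {d} (s : list (Vec d)) (i : Vec d) : R :=
  if excluded_middle_informative (In i s) then 1 else 0.

Lemma u_per {d} p q (x y : Config d) n i : Xpq p q x -> Xpq p q y ->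
  y (vadd i (lv p n)) - x (vadd i (lv p n)) = y i - x i.
Proof. intros Hx Hy. rewrite (Xpq_lv p q x n Hx), (Xpq_lv p q y n Hy). ring. Qed.

Theorem mainTheorem6 (d : nat) (r : R) (S : Vec d -> Config d -> R)
  (p : Fin.t d -> Vec d) (q : Fin.t d -> Z) (x : Config d) :
  condA r S -> condB S -> condC S -> condD S -> condE S ->
  lin_indep p ->
  Xpq p q x -> global_minimizer r S x ->
  forall y : Config d, Xpq p q y -> Wpq S p x <= Wpq S p y.
Proof.
  intros HA HB _ _ _ Hl Hx Hgm y Hy.
  destruct (Rle_dec (Wpq S p x) (Wpq S p y)) as [ok|Hlt]; auto. exfalso.
  apply Rnot_le_lt in Hlt.
  destruct (MC.right_inv d p Hl) as [A HAi].
  assert (HAinv : isRinv p A) by (intros m1 m2; rewrite HAi; destruct (Fin.eq_dec m1 m2); reflexivity).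
  destruct HA as [Hr Hloc].
  assert (loc : forall j z w, (forall k, ball j r k -> z k = w k) -> S j z = S j w)
    by (intros j; apply (proj1 (Hloc j))).
  set (K := Kc A r). assert (HK : (1 <= K)%Z) by (apply Kc_pos; lra).
  destruct (lBp_spec p) as [lBnd lBin].
  set (lB := lBp p) in *.
  set (u := fun i => y i - x i).
  set (Mx := maxlist (flat_map (fun b => map (fun s => S b (fun i => x i + chi s i * u i))
                        (power (ballList b r))) lB)).
  set (Cst := INR (length lB) * Mx).
  set (W0 := Wpq S p x) in *. set (W1 := Wpq S p y) in *.
  destruct (growth d (IZR (4 * K)) (W0 - W1) (Rmax (Cst - W0) 0)
     ltac:(apply IZR_le; lia) ltac:(lra) (Rmax_r _ _)) as [M HM].
  set (N := (Z.of_nat M + 4 * K)%Z).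
  set (cells := boxlist 0 N d).
  set (inner := fun n : Fin.t d -> Z => forall j, (K <= n j < N - K)%Z).
  set (phi := fun i => if excluded_middle_informative (inner (cell A i)) then 1 else 0).
  set (BN := flat_map (fun n => map (fun b => vadd b (lv p n)) lB) cells).
  set (yy := fun i => phi i * u i).
  set (deepb := fun n : Fin.t d -> Z => decb (forall j, (2 * K <= n j < N - 2 * K)%Z)).
  assert (inBN : forall k, (forall j, (0 <= cell A k j < N)%Z) -> In k BN).
  { intros k Hk. unfold BN. apply in_flat_map. exists (cell A k). split.
    apply (proj2 (boxlist_In _ _ _ _)); auto.
    apply in_map_iff. exists (rep p A k). split. apply decomp. apply lBin. apply rep_Bp; auto. }
  assert (cell_of : forall b n, In b lB -> cell A (vadd b (lv p n)) = n).
  { intros b n Hb. apply (decomp_uniq p A b n HAinv Hl). apply lBin; auto. }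
  assert (HND : NoDup BN).
  { unfold BN. apply NoDup_flat_map. apply boxlist_NoDup.
    - intros n _. apply NoDup_map_inj; auto. intros b b' _ _ e.
      apply functional_extensionality; intro m. pose proof (f_equal (fun f => f m) e) as e'.
      unfold vadd in e'. simpl in e'. lia.
    - intros n n' v _ _ H1 H2. apply in_map_iff in H1 as [b [e1 Hb1]].
      apply in_map_iff in H2 as [b' [e2 Hb2]].
      rewrite <- (cell_of b n Hb1), <- (cell_of b' n' Hb2), e1, e2. reflexivity. }
  assert (Hsupp : forall i, yy i <> 0 -> Defs.interior r BN i).
  { intros i Hi. unfold yy, phi in Hi.
    destruct (excluded_middle_informative (inner (cell A i))) as [Hin|]; [|lra].
    split.
    - apply inBN. intro j. specialize (Hin j). lia.
    - intros k Hk. apply inBN. intro j. specialize (Hin j).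
      pose proof (near_cell A r i k j Hk). fold K in H. lia. }
  pose proof (Hgm BN yy HND Hsupp) as Hineq.
  assert (HWx : W_B S BN x = INR (length cells) * W0).
  { unfold W_B, BN. rewrite sum_flat_map. rewrite <- sum_map_const.
    apply sum_map_ext. intros n _. rewrite map_map. unfold W0. rewrite Wpq_lBp.
    apply sum_map_ext. intros b _. apply (S_per S p q x n b HB Hx). }
  assert (HWz : W_B S BN (cfg_add x yy) <=
     W1 * INR (length (filter deepb cells)) + Cst * (INR (length cells) - INR (length (filter deepb cells)))).
  { unfold W_B, BN. rewrite sum_flat_map. apply sum_split_bound.
    intros n Hn. rewrite map_map.
    destruct (deepb n) eqn:Hdeep.
    - unfold deepb in Hdeep. apply (proj1 (decb_true _)) in Hdeep. unfold W1. rewrite Wpq_lBp. apply sum_map_ext. intros b Hb.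
      rewrite <- (S_per S p q y n b HB Hy). apply loc. intros k Hk.
      unfold cfg_add, yy, phi.
      destruct (excluded_middle_informative (inner (cell A k))) as [|Hno].
      + unfold u; ring.
      + exfalso. apply Hno. intro j. pose proof (near_cell A r _ k j Hk) as Hn2.
        rewrite cell_of in Hn2 by auto. fold K in Hn2. specialize (Hdeep j). lia.
    - unfold Cst. rewrite <- sum_map_const. 
      apply sum_map_le. intros b Hb.
      rewrite <- HB.
      set (psi := fun i => phi (vadd i (lv p n))).
      assert (Etau : tau (lv p n) (lq q n) (cfg_add x yy) = fun i => x i + psi i * u i).
      { apply functional_extensionality; intro i. unfold tau, cfg_add, yy, psi.
        rewrite (Xpq_lv p q x n Hx). unfold u. rewrite (u_per p q x y n i Hx Hy). ring. }
      rewrite Etau.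
      set (s := filter (fun i => decb (psi i = 1)) (ballList b r)).
      rewrite (loc b _ (fun i => x i + chi s i * u i)).
      + apply maxlist_ge. apply in_flat_map. exists b. split; auto.
        apply in_map_iff. exists s. split; auto. apply filter_in_power.
      + intros k Hk. f_equal. f_equal. unfold chi, s.
        destruct (excluded_middle_informative (In k _)) as [Hin|Hnin].
        * apply filter_In in Hin as [_ Hin]. exact (proj1 (decb_true _) Hin).
        * assert (psi k <> 1).
          { intro e. apply Hnin. apply filter_In. split. apply ballList_In; auto. apply (proj2 (decb_true _)); auto. }
          unfold psi, phi in *. destruct (excluded_middle_informative _); auto. contradiction. }
  assert (Hcells : INR (length cells) = (INR M + IZR (4 * K)) ^ d).
  { unfold cells. rewrite boxlist_length, pow_INR. f_equal.
    replace (N - 0)%Z with (Z.of_nat M + 4 * K)%Z by (unfold N; lia).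
    rewrite Z2Nat.inj_add by lia. rewrite plus_INR, Nat2Z.id, (INR_IZR_INZ (Z.to_nat (4 * K))), Z2Nat.id by lia.
    reflexivity. }
  assert (Hdeepc : INR (length (filter deepb cells)) = INR M ^ d).
  { rewrite (same_elems_length _ (boxlist (2 * K) (N - 2 * K) d)).
    - rewrite boxlist_length, pow_INR. f_equal. f_equal. unfold N. lia.
    - apply NoDup_filter, boxlist_NoDup.
    - apply boxlist_NoDup.
    - intro n. rewrite filter_In. unfold deepb. rewrite decb_true. unfold cells.
      rewrite !boxlist_In. split.
      + intros [_ H] j. auto.
      + intros H. split; auto. intro j. specialize (H j). lia. }
  rewrite HWx, Hcells in Hineq. rewrite Hcells, Hdeepc in HWz.
  set (m := INR M) in *. set (c := IZR (4 * K)) in *.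
  assert (Hmd : m ^ d <= (m + c) ^ d).
  { apply pow_incr. split. apply pos_INR. assert (0 <= c) by (apply IZR_le; lia). lra. }
  assert (HCm : Cst - W0 <= Rmax (Cst - W0) 0) by apply Rmax_l.
  assert (((m + c) ^ d - m ^ d) * (Cst - W0) <= ((m + c) ^ d - m ^ d) * Rmax (Cst - W0) 0)
    by (apply Rmult_le_compat_l; lra).
  nra.
Qed.
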